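(* Let $G$ be an abelian group and $X$ a finitely supported $G$-valued random variable. Let $S\subset G$ be a set with $\mathbb{P}(X\in S)\ge\frac12$. Then for any other finitely supported $G$-valued random variable $Y$, \[\log|S|\ge \mathbb{H}(Y)-4\,\mathrm{d}[X;Y]-2\log 2.\]
   Context: $\log$ is natural. $\mathbb{H}(X)=\sum_x p_X(x)\log(1/p_X(x))$ with $p_X(x)=\mathbb{P}(X=x)$. The entropic Ruzsa distance is $\mathrm{d}[X;Y]=\mathbb{H}(X'-Y')-\tfrac12\mathbb{H}(X)-\tfrac12\mathbb{H}(Y)$, where $X',Y'$ are independent with the same distributions as $X,Y$. *)

(* Defs.v *)
From mathcomp Require Import all_boot all_order all_algebra.
From mathcomp Require Import reals exp.
Set Implicit Arguments. Unset Strict Implicit. Unset Printing Implicit Defensive.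
Import Order.TTheory GRing.Theory Num.Theory.
Local Open Scope ring_scope.

Section FinSuppDist.
Variables (R : realType) (G : zmodType).

(* [p] is the probability mass function of a finitely supported G-valued
   random variable, whose support is contained in the duplicate-free list [s]. *)
Definition fsdist (p : G -> R) (s : seq G) : Prop :=
  [/\ uniq s, (forall x, 0 <= p x), (forall x, x \notin s -> p x = 0)
    & \sum_(x <- s) p x = 1].

(* Shannon entropy (natural log): H = sum_x p(x) log (1/p(x)), convention 0 log(1/0) = 0
   (automatic since the term is multiplied by p x = 0). *)
Definition entropy (p : G -> R) (s : seq G) : R :=
  \sum_(x <- s) p x * ln (p x)^-1.

Definition prob_in (p : G -> R) (s : seq G) (S : seq G) : R :=
  \sum_(x <- s | x \in S) p x.

(* Law of X' - Y' for independent X' ~ pX, Y' ~ pY. *)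
Definition diff_pmf (pX : G -> R) (sX : seq G) (pY : G -> R) (sY : seq G)
  (z : G) : R :=
  \sum_(x <- sX) \sum_(y <- sY) (if x - y == z then pX x * pY y else 0).

Definition diff_supp (sX sY : seq G) : seq G :=
  undup [seq x - y | x <- sX, y <- sY].

Definition ruzsa_dist (pX : G -> R) (sX : seq G) (pY : G -> R) (sY : seq G) : R :=
  entropy (diff_pmf pX sX pY sY) (diff_supp sX sY)
  - entropy pX sX / 2 - entropy pY sY / 2.

End FinSuppDist.

(* Main.v *)
Require Import Defs.
From mathcomp Require Import all_boot all_order all_algebra.
From mathcomp Require Import reals exp.
From mathcomp Require Import ring lra.
Set Implicit Arguments. Unset Strict Implicit. Unset Printing Implicit Defensive.
Import Order.TTheory GRing.Theory Num.Theory.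
Local Open Scope ring_scope.

Lemma gib (R : realType) (a b : R) : 0 <= a -> 0 <= b -> (0 < a -> 0 < b) -> a - b <= a * (ln a - ln b).
Proof.
move=> a0 b0 ab; have [->|apos] := eqVneq a 0; first by rewrite mul0r; lra.
have ap : 0 < a by rewrite lt0r apos.
have bp := ab ap.
have h := @le_ln1Dx R (b / a - 1) ltac:(have : 0 < b / a by apply: divr_gt0; lra).
have e : 1 + (b / a - 1) = b / a by ring.
rewrite e ln_div ?posrE // in h.
have e2 : a * (b / a) = b by rewrite mulrC divfK // gt_eqF.
nra.
Qed.

Lemma gib_seq (R : realType) (I : Type) (r : seq I) (P : pred I) (a b : I -> R) :
  (forall i, P i -> 0 <= a i) -> (forall i, P i -> 0 <= b i) ->
  (forall i, P i -> 0 < a i -> 0 < b i) ->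
  \sum_(i <- r | P i) a i - \sum_(i <- r | P i) b i <=
  \sum_(i <- r | P i) a i * (ln (a i) - ln (b i)).
Proof.
move=> ha hb hab; rewrite -sumrB; apply: ler_sum => i Pi; apply: gib; auto.
Qed.

Lemma ent_term (R : realType) (p : R) : 0 <= p -> p * ln p^-1 = - (p * ln p).
Proof.
move=> p0; have [->|pn] := eqVneq p 0; first by rewrite !mul0r oppr0.
by rewrite lnV ?posrE ?lt0r ?pn // mulrN.
Qed.

Lemma sum_ite_le (R : realType) (I : eqType) (r : seq I) (Q P : pred I) (j : I) (c : R) :
  (forall i, P i -> i = j) -> uniq r -> 0 <= c ->
  \sum_(i <- r | Q i) (if P i then c else 0) <= c.
Proof.
move=> hP ur c0; rewrite -big_filter.
have uf : uniq (filter Q r) by rewrite filter_uniq.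
case: (boolP (j \in filter Q r)) => jin.
  rewrite (bigD1_seq j) //= big1 ?addr0; first by case: (P j).
  by move=> i ij; case: ifP => // /hP ie; rewrite ie eqxx in ij.
rewrite big_seq big1 // => i iin; case: ifP => // /hP ie.
by rewrite -ie iin in jin.
Qed.

Lemma final_arith (R : realType) (p q pl ql LY LXs LXc Ls Lc LZs LZc n L2 : R) :
  pl + LZs <= Ls -> ql + LZc <= Lc ->
  0 <= pl + (p * LY - Ls) -> 0 <= ql + (q * LY - Lc) ->
  0 <= LXs + p * LY - Ls + p * n -> 0 <= LXc - Lc ->
  0 <= LY - (LZs + LZc) -> 0 <= LXs + LXc - (LZs + LZc) ->
  - L2 <= pl + ql -> 0 <= L2 -> p + q = 1 -> 1 / 2 <= p ->
  - LY - 4 * (- (LZs + LZc) - - (LXs + LXc) / 2 - - LY / 2) - 2 * L2 <= n.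
Proof.
move=> Zs Zc As Ac Cs Bc Aa Ba e2 l2 pq hp.
have qLY : q * LY = LY - p * LY.
  have -> : q = 1 - p by lra.
  by rewrite mulrBl mul1r.
have key : p * (- LY - n) - L2 <= 2 * (- (LZs + LZc) + (LXs + LXc) / 2 + LY / 2).
  rewrite mulrBr mulrN; lra.
have [a0|a0] := lerP (- LY - n) 0; first by lra.
have : (- LY - n) / 2 <= p * (- LY - n) by nra.
lra.
Qed.
Section Main.
Variables (R : realType) (G : zmodType) (pX pY : G -> R) (sX sY : seq G).
Hypotheses (hX : fsdist pX sX) (hY : fsdist pY sY).

Definition ZT (T : pred G) (z : G) : R :=
  \sum_(x <- sX | T x) \sum_(y <- sY) (if x - y == z then pX x * pY y else 0).
Definition pT (T : pred G) : R := \sum_(x <- sX | T x) pX x.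
Definition XY (T : pred G) (F : G -> G -> R) : R :=
  \sum_(x <- sX | T x) \sum_(y <- sY) pX x * pY y * F x y.
Definition ZA := ZT xpredT.
Definition D := diff_supp sX sY.

Lemma pX0 x : 0 <= pX x. Proof. by case: hX. Qed.
Lemma pY0 y : 0 <= pY y. Proof. by case: hY. Qed.
Lemma uX : uniq sX. Proof. by case: hX. Qed.
Lemma uY : uniq sY. Proof. by case: hY. Qed.
Lemma sX1 : \sum_(x <- sX) pX x = 1. Proof. by case: hX. Qed.
Lemma sY1 : \sum_(y <- sY) pY y = 1. Proof. by case: hY. Qed.

Lemma w0 x y : 0 <= pX x * pY y. Proof. by rewrite mulr_ge0 ?pX0 ?pY0. Qed.

Lemma wpos x y : 0 < pX x * pY y ->
  [/\ 0 < pX x, 0 < pY y, x \in sX & y \in sY].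
Proof.
move=> wp.
have px : 0 < pX x.
  rewrite lt0r pX0 andbT; apply/eqP => e; by rewrite e mul0r ltxx in wp.
have py : 0 < pY y.
  rewrite lt0r pY0 andbT; apply/eqP => e; by rewrite e mulr0 ltxx in wp.
split=> //.
  apply/negPn/negP => xn; case: hX => _ _ h _; by rewrite h ?ltxx in px.
apply/negPn/negP => yn; case: hY => _ _ h _; by rewrite h ?ltxx in py.
Qed.

Lemma ZT0 (T : pred G) z : 0 <= ZT T z.
Proof.
by apply: sumr_ge0 => x _; apply: sumr_ge0 => y _; case: ifP => // _; apply: w0.
Qed.

Lemma pT0 (T : pred G) : 0 <= pT T. Proof. by apply: sumr_ge0 => x _; apply: pX0. Qed.

Lemma pT_ge (T : pred G) x : T x -> x \in sX -> pX x <= pT T.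
Proof.
move=> Tx xin; rewrite /pT -big_filter.
rewrite (bigD1_seq x) ?mem_filter ?Tx ?filter_uniq ?uX //=.
by rewrite lerDl; apply: sumr_ge0 => i _; apply: pX0.
Qed.

Lemma ZT_ge (T : pred G) x y : T x -> x \in sX -> y \in sY -> pX x * pY y <= ZT T (x - y).
Proof.
move=> Tx xin yin; rewrite /ZT -big_filter.
rewrite (bigD1_seq x) ?mem_filter ?Tx ?filter_uniq ?uX //=.
rewrite -[X in X <= _]addr0; apply: lerD; last first.
  apply: sumr_ge0 => i _; apply: sumr_ge0 => j _; case: ifP => // _; apply: w0.
rewrite (bigD1_seq y) ?uY //= eqxx -[X in X <= _]addr0 lerD //.
by apply: sumr_ge0 => j _; case: ifP => // _; apply: w0.
Qed.

Lemma XY1 (T : pred G) : XY T (fun _ _ => 1) = pT T.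
Proof.
rewrite /XY /pT; apply: eq_bigr => x _.
rewrite (eq_bigr (fun y => pX x * pY y)) => [|y _]; last by rewrite mulr1.
by rewrite -big_distrr /= sY1 mulr1.
Qed.

Lemma ZT_le (T : pred G) z : ZT T z <= pT T.
Proof.
rewrite -XY1 /ZT /XY; apply: ler_sum => x _; apply: ler_sum => y _.
by rewrite mulr1; case: ifP => // _; apply: w0.
Qed.

Lemma ZT_le_ZA (T : pred G) z : ZT T z <= ZA z.
Proof.
have -> : ZA z = ZT T z + ZT (predC T) z by rewrite /ZA /ZT [LHS](bigID T).
by rewrite lerDl ZT0.
Qed.

Lemma sum_y_ZT (T : pred G) x0 : \sum_(y <- sY) ZT T (x0 - y) <= pT T.
Proof.
rewrite -XY1 /ZT /XY exchange_big /=; apply: ler_sum => x _.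
rewrite exchange_big /=; apply: ler_sum => y' _; rewrite mulr1.
apply: (@sum_ite_le _ _ _ _ _ (x0 - x + y')); [|exact: uY|exact: w0].
by move=> i /eqP e; rewrite -(subKr x0 i) -e opprB addrA addrAC.
Qed.

Lemma sum_x_ZT (T T' : pred G) y0 : \sum_(x <- sX | T' x) ZT T (x - y0) <= pT T.
Proof.
rewrite -XY1 /ZT /XY exchange_big /=; apply: ler_sum => x _.
rewrite exchange_big /=; apply: ler_sum => y' _; rewrite mulr1.
apply: (@sum_ite_le _ _ _ _ _ (x - y' + y0)); [|exact: uX|exact: w0].
by move=> i /eqP e; rewrite e addrNK.
Qed.

Lemma zsum (T : pred G) (f : G -> R) :
  \sum_(z <- D) ZT T z * f z = XY T (fun x y => f (x - y)).
Proof.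
rewrite /ZT /XY.
under eq_bigr do rewrite big_distrl /=.
under eq_bigr do under eq_bigr do rewrite big_distrl /=.
rewrite exchange_big /=.
rewrite big_seq_cond [RHS]big_seq_cond; apply: eq_bigr => x /andP[xin _].
rewrite exchange_big /= big_seq [RHS]big_seq; apply: eq_bigr => y yin.
have hm : x - y \in [seq x0 - y0 | x0 <- sX, y0 <- sY].
  exact: (@allpairs_f _ _ _ (fun a b => a - b)).
rewrite (bigD1_seq (x - y)) /D /diff_supp ?undup_uniq ?mem_undup //=.
rewrite eqxx big1 ?addr0 //.
by move=> z zn; rewrite eq_sym (negbTE zn) mul0r.
Qed.

Lemma XY_ext (T : pred G) F F' :
  (forall x y, T x -> 0 < pX x * pY y -> F x y = F' x y) -> XY T F = XY T F'.
Proof.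
move=> h; rewrite /XY; apply: eq_bigr => x Tx; apply: eq_bigr => y _.
have := w0 x y; rewrite le_eqVlt => /orP[/eqP <-|wp]; first by rewrite !mul0r.
by rewrite (h x y Tx wp).
Qed.

Lemma XY_D (T : pred G) F F' :
  XY T (fun x y => F x y + F' x y) = XY T F + XY T F'.
Proof.
rewrite /XY -big_split; apply: eq_bigr => x _; rewrite -big_split.
by apply: eq_bigr => y _; rewrite mulrDr.
Qed.

Lemma XY_N (T : pred G) F : XY T (fun x y => - F x y) = - XY T F.
Proof.
rewrite /XY -sumrN; apply: eq_bigr => x _; rewrite -sumrN.
by apply: eq_bigr => y _; rewrite mulrN.
Qed.

Lemma XY_c (T : pred G) c : XY T (fun _ _ => c) = pT T * c.
Proof.
rewrite -XY1 /XY big_distrl; apply: eq_bigr => x _; rewrite big_distrl.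
by apply: eq_bigr => y _; rewrite mulr1.
Qed.

Lemma XY_fx (T : pred G) f : XY T (fun x _ => f x) = \sum_(x <- sX | T x) pX x * f x.
Proof.
rewrite /XY; apply: eq_bigr => x _.
rewrite (eq_bigr (fun y => pY y * (pX x * f x))) => [|y _]; last by ring.
by rewrite -big_distrl /= sY1 mul1r.
Qed.

Lemma XY_fy (T : pred G) g : XY T (fun _ y => g y) = pT T * \sum_(y <- sY) pY y * g y.
Proof.
rewrite /XY /pT big_distrl; apply: eq_bigr => x _; rewrite big_distrr.
by apply: eq_bigr => y _ /=; ring.
Qed.

Lemma gibbsXY (T : pred G) (b : G -> G -> R) :
  (forall x y, 0 <= b x y) -> (forall x y, T x -> 0 < pX x * pY y -> 0 < b x y) ->
  pT T - \sum_(x <- sX | T x) \sum_(y <- sY) b x y <=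
  XY T (fun x y => ln (pX x * pY y) - ln (b x y)).
Proof.
move=> hb hab; rewrite -XY1 /XY -sumrB; apply: ler_sum => x Tx.
rewrite -sumrB; apply: ler_sum => y _; rewrite mulr1; apply: gib; [exact: w0| exact: hb| exact: hab].
Qed.

Lemma gibbs_use (T : pred G) (b : G -> G -> R) F :
  (forall x y, 0 <= b x y) -> (forall x y, T x -> 0 < pX x * pY y -> 0 < b x y) ->
  \sum_(x <- sX | T x) \sum_(y <- sY) b x y <= pT T ->
  (forall x y, T x -> 0 < pX x * pY y -> ln (pX x * pY y) - ln (b x y) = F x y) ->
  0 <= XY T F.
Proof.
move=> hb hab hs he.
rewrite -(@XY_ext T (fun x y => ln (pX x * pY y) - ln (b x y))); last exact: he.
have := gibbsXY hb hab; lra.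
Qed.

Lemma A_T (T : pred G) :
  0 <= pT T * ln (pT T) + XY T (fun x y => ln (pY y) - ln (ZT T (x - y))).
Proof.
have h := @gibbs_use T (fun x y => pX x / pT T * ZT T (x - y))
   (fun x y => (ln (pY y) - ln (ZT T (x - y))) + ln (pT T)).
rewrite XY_D XY_c addrC in h; apply: h.
- by move=> x y; rewrite mulr_ge0 ?divr_ge0 ?pX0 ?pT0 ?ZT0.
- move=> x y Tx /wpos [px py xin yin].
  have := ZT_ge Tx xin yin; have := pT_ge Tx xin => h1 h2.
  apply: mulr_gt0; last by apply: lt_le_trans h2; exact: mulr_gt0.
  apply: divr_gt0 => //; lra.
- under eq_bigr do rewrite -big_distrr /=.
  apply: (@le_trans _ _ (\sum_(x <- sX | T x) pX x / pT T * pT T)).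
    apply: ler_sum => x _; apply: ler_wpM2l; last exact: sum_y_ZT.
    by rewrite divr_ge0 ?pX0 ?pT0.
  have [e|ne] := eqVneq (pT T) 0.
    rewrite e; under eq_bigr do rewrite mulr0; by rewrite big1.
  by under eq_bigr do rewrite divfK //.
- move=> x y Tx wp; have [px py xin yin] := wpos wp.
  have h1 := ZT_ge Tx xin yin; have h2 := pT_ge Tx xin.
  have q1 : 0 < pT T by lra.
  have q2 : 0 < ZT T (x - y) by lra.
  have q3 : 0 < (pT T)^-1 by rewrite invr_gt0.
  have q4 : 0 < pX x / pT T by rewrite divr_gt0.
  rewrite !lnM ?posrE // lnV ?posrE //; lra.
Qed.

Lemma B_T (T : pred G) :
  0 <= XY T (fun x y => ln (pX x) - ln (ZT T (x - y))).
Proof.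
apply: (@gibbs_use T (fun x y => ZT T (x - y) * pY y)).
- by move=> x y; rewrite mulr_ge0 ?ZT0 ?pY0.
- move=> x y Tx /wpos [px py xin yin].
  have := ZT_ge Tx xin yin => h1.
  apply: mulr_gt0 => //; apply: lt_le_trans h1; exact: mulr_gt0.
- rewrite exchange_big /=.
  under eq_bigr do rewrite -big_distrl /=.
  apply: (@le_trans _ _ (\sum_(y <- sY) pT T * pY y)).
    apply: ler_sum => y _; apply: ler_wpM2r; [exact: pY0| exact: sum_x_ZT].
  by rewrite -big_distrr /= sY1 mulr1.
- move=> x y Tx wp; have [px py xin yin] := wpos wp.
  have h1 := ZT_ge Tx xin yin.
  have q2 : 0 < ZT T (x - y) by lra.
  rewrite !lnM ?posrE //; lra.
Qed.

Lemma C_S (S : seq G) : uniq S -> 0 < pT (fun x => x \in S) ->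
  0 <= XY (fun x => x \in S)
     (fun x y => ln (pX x) + ln (pY y) - ln (ZT (fun x => x \in S) (x - y))
                 + ln (size S)%:R).
Proof.
move=> uS pp.
set T := (fun x => x \in S).
have np : 0 < (size S)%:R :> R.
  rewrite ltr0n lt0n; apply/negP => /eqP /size0nil eS.
  move: pp; rewrite /pT big1 ?ltxx // => x; by rewrite /T eS in_nil.
apply: (@gibbs_use T (fun x y => ZT T (x - y) / (size S)%:R)).
- by move=> x y; rewrite divr_ge0 ?ZT0 ?ler0n.
- move=> x y Tx /wpos [px py xin yin].
  have := ZT_ge Tx xin yin => h1.
  apply: divr_gt0 => //; apply: lt_le_trans h1; exact: mulr_gt0.
- under eq_bigr do rewrite -big_distrl /=.
  apply: (@le_trans _ _ (\sum_(x <- sX | T x) pT T / (size S)%:R)).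
    apply: ler_sum => x _; apply: ler_wpM2r; [by rewrite invr_ge0 ler0n| exact: sum_y_ZT].
  rewrite big_const_seq iter_addr_0.
  have -> : forall c : R, c *+ count T sX = c * (count T sX)%:R by move=> c; rewrite mulr_natr.
  have cs : (count T sX <= size S)%N.
    rewrite -size_filter; apply: uniq_leq_size; first by rewrite filter_uniq ?uX.
    by move=> x; rewrite mem_filter => /andP[].
  have : (count T sX)%:R <= (size S)%:R :> R by rewrite ler_nat.
  have := pT0 T.
  have e : pT T / (size S)%:R * (size S)%:R = pT T by rewrite divfK // gt_eqF.
  move=> h1 h2; rewrite -[X in _ <= X]e; apply: ler_wpM2l => //.
  by rewrite divr_ge0 ?ler0n.
- move=> x y Tx wp; have [px py xin yin] := wpos wp.
  have h1 := ZT_ge Tx xin yin.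
  have q2 : 0 < ZT T (x - y) by lra.
  have q3 : 0 < ((size S)%:R : R)^-1 by rewrite invr_gt0.
  rewrite !lnM ?posrE // lnV ?posrE //; lra.
Qed.

Lemma Zlev (T : pred G) :
  pT T * ln (pT T) + XY T (fun x y => ln (ZA (x - y))) <= XY T (fun x y => ln (ZT T (x - y))).
Proof.
have h := @gib_seq R G D xpredT (ZT T) (fun z => pT T * ZA z).
have h1 : \sum_(z <- D) ZT T z = pT T.
  by rewrite -XY1 -(zsum T (fun _ => 1)); apply: eq_bigr => z _; rewrite mulr1.
have h2 : \sum_(z <- D) ZA z = 1.
  by rewrite -sX1 -[RHS]XY1 -(zsum xpredT (fun _ => 1)); apply: eq_bigr => z _; rewrite mulr1.
rewrite h1 -big_distrr /= h2 mulr1 subrr in h.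
rewrite (eq_bigr (fun z => ZT T z * ln (ZT T z) - ZT T z * ln (ZA z) - ZT T z * ln (pT T))) in h; last first.
  move=> z _; have := ZT0 T z; rewrite le_eqVlt => /orP[/eqP <-|zp]; first by rewrite !mul0r; lra.
  have := ZT_le T z; have := ZT_le_ZA T z => a1 a2.
  have q1 : 0 < pT T by lra.
  have q2 : 0 < ZA z by lra.
  rewrite lnM ?posrE //; ring.
rewrite !sumrB (zsum T (fun z => ln (ZT T z))) (zsum T (fun z => ln (ZA z)))
  (zsum T (fun _ => ln (pT T))) XY_c in h.
suff : 0 <= XY T (fun x y : G => ln (ZT T (x - y))) -
    XY T (fun x y : G => ln (ZA (x - y))) - pT T * ln (pT T) by lra.
apply: h.
- by move=> z _; exact: ZT0.
- by move=> z _; rewrite mulr_ge0 ?pT0 ?ZT0.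
- move=> z _ zp; have := ZT_le T z; have := ZT_le_ZA T z => a1 a2.
  apply: mulr_gt0; lra.
Qed.

Lemma HZe : entropy (diff_pmf pX sX pY sY) (diff_supp sX sY) =
  - XY xpredT (fun x y => ln (ZA (x - y))).
Proof.
rewrite -(zsum xpredT (fun z => ln (ZA z))) -sumrN /entropy /D; apply: eq_bigr => z _.
change (ZA z * ln (ZA z)^-1 = - (ZA z * ln (ZA z))).
by rewrite ent_term ?ZT0.
Qed.

Lemma HXe : entropy pX sX = - XY xpredT (fun x _ => ln (pX x)).
Proof.
rewrite XY_fx -sumrN /entropy; apply: eq_bigr => x _; by rewrite ent_term ?pX0.
Qed.

Lemma HYe : entropy pY sY = - \sum_(y <- sY) pY y * ln (pY y).
Proof.
rewrite -sumrN /entropy; apply: eq_bigr => y _; by rewrite ent_term ?pY0.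
Qed.

Lemma XY_split (S : seq G) F :
  XY xpredT F = XY (fun x => x \in S) F + XY (fun x => x \notin S) F.
Proof. by rewrite /XY (bigID (fun x => x \in S)). Qed.

Lemma pT_split (S : seq G) : pT (fun x => x \in S) + pT (fun x => x \notin S) = 1.
Proof. by rewrite -sX1 /pT [RHS](bigID (fun x => x \in S)). Qed.

Lemma pT1 : pT xpredT = 1. Proof. exact: sX1. Qed.

Lemma ent2 (p q : R) : 0 <= p -> 0 <= q -> p + q = 1 -> - ln 2 <= p * ln p + q * ln q.
Proof.
move=> p0 q0 e.
have h2 : 0 < (2 : R)^-1 by rewrite invr_gt0.
have := @gib R p 2^-1 p0 (ltW h2) (fun _ => h2).
have := @gib R q 2^-1 q0 (ltW h2) (fun _ => h2).
rewrite lnV ?posrE //; nra.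
Qed.

Lemma main_sec (S : seq G) : uniq S -> 1 / 2 <= prob_in pX sX S ->
  entropy pY sY - 4 * ruzsa_dist pX sX pY sY - 2 * ln 2 <= ln (size S)%:R.
Proof.
move=> uS hp.
have pe : prob_in pX sX S = pT (fun x => x \in S) by [].
rewrite pe in hp.
have pq := pT_split S.
have q0 := pT0 (fun x => x \notin S).
have Zs := Zlev (fun x => x \in S); have Zc := Zlev (fun x => x \notin S).
have As := A_T (fun x => x \in S).
rewrite XY_D XY_N (XY_fy _ (fun y => ln (pY y))) in As.
have Ac := A_T (fun x => x \notin S).
rewrite XY_D XY_N (XY_fy _ (fun y => ln (pY y))) in Ac.
have pp : 0 < pT (fun x => x \in S) by lra.
have Cs := C_S uS pp; rewrite !XY_D !XY_N XY_c (XY_fy _ (fun y => ln (pY y))) in Cs.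
have Bc := B_T (fun x => x \notin S); rewrite XY_D XY_N in Bc.
have Aa := A_T xpredT; rewrite XY_D XY_N (XY_fy xpredT (fun y => ln (pY y))) pT1 in Aa.
have Ba := B_T xpredT; rewrite XY_D XY_N in Ba.
change (ZT xpredT) with ZA in Aa; change (ZT xpredT) with ZA in Ba.
rewrite (XY_split S (fun x y => ln (ZA (x - y)))) in Aa Ba.
rewrite (XY_split S (fun x _ => ln (pX x))) in Ba.
rewrite ln1 mulr0 add0r mul1r in Aa.
have e2 := ent2 (pT0 _) q0 pq.
rewrite /ruzsa_dist HZe HXe HYe (XY_split S (fun x y => ln (ZA (x - y))))
  (XY_split S (fun x _ => ln (pX x))).
have l2 : 0 <= ln (2 : R) by apply: ln_ge0; lra.
exact: (final_arith Zs Zc As Ac Cs Bc Aa Ba e2 l2 pq hp).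
Qed.
End Main.

Theorem propositionA8 (R : realType) (G : zmodType)
  (pX : G -> R) (sX : seq G) (pY : G -> R) (sY : seq G) (S : seq G) :
  fsdist pX sX -> fsdist pY sY -> uniq S ->
  1 / 2 <= prob_in pX sX S ->
  entropy pY sY - 4 * ruzsa_dist pX sX pY sY - 2 * ln 2 <= ln (size S)%:R.
Proof.
move=> hX hY uS hp; exact: (main_sec hX hY uS hp).
Qed.
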